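(* Let $(Y,\rho)$ be a metric space, $\hookrightarrow_*$ a monotone embedding relation on the subsets of $Y$, $X$ a paracompact space, and $\varphi:X\rightrightarrows Y$ a $\rho$-continuous mapping such that each $\varphi(x)$, $x\in X$, is uniformly $UV^*$. Suppose $\mathscr{U}_1$ is a locally finite open cover of $X$ and $\delta_1:\mathscr{U}_1\to(0,+\infty)$. Then there exist a locally finite open cover $\mathscr{U}_2$ of $X$ refining $\mathscr{U}_1$ and functions $\delta_2,\varepsilon_2:\mathscr{U}_2\to(0,+\infty)$ with $\delta_2\le\varepsilon_2$ such that: (i) $\mathbf{O}_{\delta_2(U)}(\varphi(p))\hookrightarrow_*\mathbf{O}_{\varepsilon_2(U)}(\varphi(p))$ for every $U\in\mathscr{U}_2$ and $p\in U$; (ii) $H(\rho)(\varphi(p),\varphi(q))<\delta_2(U)/2$ for every $U\in\mathscr{U}_2$ and $p,q\in U$; (iii) $\varepsilon_2(U_2)\le\delta_1(U_1)/3$ whenever $U_1\in\mathscr{U}_1$, $U_2\in\mathscr{U}_2$ and $U_1\cap U_2\ne\emptyset$.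
   Context: A set-valued mapping $\varphi:X\rightrightarrows Y$ assigns to each $x\in X$ a nonempty subset $\varphi(x)\subset Y$. For a metric space $(Y,\rho)$, $\mathbf{O}_\varepsilon(y)$ is the open $\varepsilon$-ball about $y$ and $\mathbf{O}_\varepsilon(S)=\bigcup_{q\in S}\mathbf{O}_\varepsilon(q)$. The Hausdorff distance of nonempty $S,T\subset Y$ is $H(\rho)(S,T)=\inf\{\varepsilon>0: S\subset\mathbf{O}_\varepsilon(T),\ T\subset\mathbf{O}_\varepsilon(S)\}$. A mapping $\varphi$ is $\rho$-continuous if for every $\varepsilon>0$ each $x\in X$ has a neighbourhood $V$ with $\varphi(x)\subset\mathbf{O}_\varepsilon(\varphi(p))$ and $\varphi(p)\subset\mathbf{O}_\varepsilon(\varphi(x))$ for all $p\in V$. An embedding relation $\hookrightarrow_*$ on subsets of $Y$ is a relation with $S\hookrightarrow_*T$ implying $S\subset T$; it is monotone if $A\subset S\hookrightarrow_* T\subset B$ implies $A\hookrightarrow_* B$. A subset $S\subset Y$ is uniformly $UV^*$ if for every $\varepsilon>0$ there is $\delta>0$ with $\mathbf{O}_\delta(S)\hookrightarrow_*\mathbf{O}_\varepsilon(S)$. *)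

(* Defs.v *)
From Stdlib Require Import Reals List.
Open Scope R_scope.

Definition is_topology {X : Type} (open : (X -> Prop) -> Prop) : Prop :=
  open (fun _ => True) /\
  (forall U V, open U -> open V -> open (fun x => U x /\ V x)) /\
  (forall F : (X -> Prop) -> Prop, (forall U, F U -> open U) ->
       open (fun x => exists U, F U /\ U x)).

Definition hausdorff {X : Type} (open : (X -> Prop) -> Prop) : Prop :=
  forall x y : X, x <> y -> exists U V, open U /\ open V /\ U x /\ V y /\
     (forall z, ~ (U z /\ V z)).

Definition open_cover {X : Type} (open : (X -> Prop) -> Prop)
  (C : (X -> Prop) -> Prop) : Prop :=
  (forall U, C U -> open U) /\ (forall x, exists U, C U /\ U x).

Definition locally_finite {X : Type} (open : (X -> Prop) -> Prop)
  (C : (X -> Prop) -> Prop) : Prop :=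
  forall x, exists V, open V /\ V x /\
    exists l : list (X -> Prop),
      forall U, C U -> (exists y, V y /\ U y) -> In U l.

Definition refines {X : Type} (C2 C1 : (X -> Prop) -> Prop) : Prop :=
  forall U2, C2 U2 -> exists U1, C1 U1 /\ (forall x, U2 x -> U1 x).

(* Paracompact (Hausdorff, as is standard): every open cover has a locally
   finite open refinement. *)
Definition paracompact {X : Type} (open : (X -> Prop) -> Prop) : Prop :=
  hausdorff open /\
  forall C, open_cover open C ->
    exists C', open_cover open C' /\ locally_finite open C' /\ refines C' C.

Definition is_metric {Y : Type} (rho : Y -> Y -> R) : Prop :=
  (forall y z, 0 <= rho y z) /\
  (forall y z, rho y z = 0 <-> y = z) /\
  (forall y z, rho y z = rho z y) /\
  (forall y z w, rho y w <= rho y z + rho z w).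

Definition ball {Y : Type} (rho : Y -> Y -> R) (eps : R) (y : Y) : Y -> Prop :=
  fun z => rho y z < eps.
Definition Onbhd {Y : Type} (rho : Y -> Y -> R) (eps : R) (S : Y -> Prop) : Y -> Prop :=
  fun z => exists q, S q /\ ball rho eps q z.

Definition subset {Y : Type} (S T : Y -> Prop) : Prop := forall y, S y -> T y.

Definition is_inf (E : R -> Prop) (h : R) : Prop :=
  (forall e, E e -> h <= e) /\ (forall b, (forall e, E e -> b <= e) -> b <= h).

(* H(rho)(S,T) = inf{eps > 0 : S ⊂ O_eps(T), T ⊂ O_eps(S)};
   hausdorff_dist_is rho S T h  means this infimum exists and equals h
   (when the set is empty the Hausdorff distance is +oo and no h exists). *)
Definition hausdorff_dist_is {Y : Type} (rho : Y -> Y -> R) (S T : Y -> Prop) (h : R) : Prop :=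
  is_inf (fun eps => 0 < eps /\ subset S (Onbhd rho eps T) /\ subset T (Onbhd rho eps S)) h.

Definition setvalued {X Y : Type} (phi : X -> Y -> Prop) : Prop :=
  forall x, exists y, phi x y.

Definition rho_continuous {X Y : Type} (open : (X -> Prop) -> Prop)
  (rho : Y -> Y -> R) (phi : X -> Y -> Prop) : Prop :=
  forall eps, 0 < eps -> forall x, exists V, open V /\ V x /\
    forall p, V p -> subset (phi x) (Onbhd rho eps (phi p)) /\
                     subset (phi p) (Onbhd rho eps (phi x)).

Definition embedding_relation {Y : Type} (emb : (Y -> Prop) -> (Y -> Prop) -> Prop) : Prop :=
  forall S T, emb S T -> subset S T.

Definition monotone_emb {Y : Type} (emb : (Y -> Prop) -> (Y -> Prop) -> Prop) : Prop :=
  forall A S T B, subset A S -> emb S T -> subset T B -> emb A B.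

Definition uniformly_UV {Y : Type} (rho : Y -> Y -> R)
  (emb : (Y -> Prop) -> (Y -> Prop) -> Prop) (S : Y -> Prop) : Prop :=
  forall eps, 0 < eps -> exists delta, 0 < delta /\
    emb (Onbhd rho delta S) (Onbhd rho eps S).

(* Main.v *)
Require Import Defs.
From Stdlib Require Import Reals List.
From Stdlib Require Import Lra Classical ClassicalEpsilon.
Open Scope R_scope.

Lemma sub_trans_O {Y : Type} (rho : Y -> Y -> R) (Hrho : is_metric rho)
  (A B C : Y -> Prop) a b :
  subset A (Onbhd rho b B) -> subset B (Onbhd rho a C) ->
  subset A (Onbhd rho (a + b) C).
Proof.
  intros H1 H2 y Ay. destruct (H1 y Ay) as [q [Bq Hq]].
  destruct (H2 q Bq) as [q' [Cq' Hq']].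
  exists q'. split; auto. unfold ball in *.
  destruct Hrho as [_ [_ [_ Ht]]]. specialize (Ht q' q y). lra.
Qed.

Lemma sub_id_O {Y : Type} (rho : Y -> Y -> R) (S : Y -> Prop) a :
  subset (Onbhd rho a S) (Onbhd rho a S).
Proof. intros y H; exact H. Qed.

Lemma sub_rad_O {Y : Type} (rho : Y -> Y -> R) (S : Y -> Prop) a b :
  a <= b -> subset (Onbhd rho a S) (Onbhd rho b S).
Proof.
  intros Hab y [q [Sq Hq]]. exists q. split; auto. unfold ball in *. lra.
Qed.

Lemma inf_exists (E : R -> Prop) :
  (exists e, E e) -> (forall e, E e -> 0 < e) -> exists h, is_inf E h.
Proof.
  intros [e0 He0] Hpos.
  set (F := fun x => E (- x)).
  assert (Hb : bound F).
  { exists 0. intros x Fx. unfold F in Fx. specialize (Hpos _ Fx). lra. }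
  assert (Hne : exists x, F x).
  { exists (- e0). unfold F. rewrite Ropp_involutive. exact He0. }
  destruct (completeness F Hb Hne) as [m [Hub Hlub]].
  exists (- m). split.
  - intros e Ee. assert (F (- e)) by (unfold F; rewrite Ropp_involutive; exact Ee).
    specialize (Hub _ H). lra.
  - intros b Hb'. assert (m <= - b).
    { apply Hlub. intros x Fx. specialize (Hb' _ Fx). lra. }
    lra.
Qed.

Lemma list_min {A : Type} (P : A -> Prop) (f : A -> R) (l : list A) :
  (forall a, P a -> 0 < f a) ->
  exists m, 0 < m /\ forall a, In a l -> P a -> m <= f a.
Proof.
  intros Hp. induction l as [|a l IH].
  - exists 1. split; [lra|]. intros a [].
  - destruct IH as [m [Hm Hl]]. destruct (classic (P a)) as [Pa|nPa].
    + exists (Rmin m (f a)). split.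
      * apply Rmin_glb_lt; auto.
      * intros b [<-|Hb] Pb.
        -- apply Rmin_r.
        -- eapply Rle_trans; [apply Rmin_l|]. auto.
    + exists m. split; auto. intros b [<-|Hb] Pb; [contradiction|auto].
Qed.

Definition Pgood {Y X : Type} (rho : Y -> Y -> R)
  (emb : (Y -> Prop) -> (Y -> Prop) -> Prop) (phi : X -> Y -> Prop)
  (U1 : (X -> Prop) -> Prop) (delta1 : (X -> Prop) -> R)
  (U : X -> Prop) (d e : R) : Prop :=
  0 < d /\ 0 < e /\ d <= e /\
  (forall p, U p -> emb (Onbhd rho d (phi p)) (Onbhd rho e (phi p))) /\
  (forall p q, U p -> U q ->
     exists h, hausdorff_dist_is rho (phi p) (phi q) h /\ h < d / 2) /\
  (forall V1, U1 V1 -> (exists x, V1 x /\ U x) -> e <= delta1 V1 / 3).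

Lemma Pgood_sub {Y X : Type} rho emb (phi : X -> Y -> Prop) U1 delta1 U V d e :
  (forall x, V x -> U x) -> Pgood rho emb phi U1 delta1 U d e ->
  Pgood rho emb phi U1 delta1 V d e.
Proof.
  intros HVU [H1 [H2 [H3 [H4 [H5 H6]]]]].
  repeat split; auto.
  - intros V1 HV1 [x [Hx1 Hx2]]. apply H6; auto. exists x; auto.
Qed.

Theorem proposition2p4
  (Y : Type) (rho : Y -> Y -> R) (Hrho : is_metric rho)
  (emb : (Y -> Prop) -> (Y -> Prop) -> Prop)
  (Hemb : embedding_relation emb) (Hmono : monotone_emb emb)
  (X : Type) (open : (X -> Prop) -> Prop)
  (Htop : is_topology open) (Hpc : paracompact open)
  (phi : X -> Y -> Prop) (Hphi : setvalued phi)
  (Hcont : rho_continuous open rho phi)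
  (HUV : forall x, uniformly_UV rho emb (phi x))
  (U1 : (X -> Prop) -> Prop) (HU1 : open_cover open U1) (HU1lf : locally_finite open U1)
  (delta1 : (X -> Prop) -> R) (Hdelta1 : forall U, U1 U -> 0 < delta1 U) :
  exists (U2 : (X -> Prop) -> Prop) (delta2 eps2 : (X -> Prop) -> R),
    open_cover open U2 /\ locally_finite open U2 /\ refines U2 U1 /\
    (forall U, U2 U -> 0 < delta2 U /\ 0 < eps2 U /\ delta2 U <= eps2 U) /\
    (forall U p, U2 U -> U p ->
       emb (Onbhd rho (delta2 U) (phi p)) (Onbhd rho (eps2 U) (phi p))) /\
    (forall U p q, U2 U -> U p -> U q ->
       exists h, hausdorff_dist_is rho (phi p) (phi q) h /\ h < delta2 U / 2) /\
    (forall V1 V2, U1 V1 -> U2 V2 -> (exists x, V1 x /\ V2 x) ->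
       eps2 V2 <= delta1 V1 / 3).
Proof.
  set (C := fun G : X -> Prop => open G /\
              (exists d e, Pgood rho emb phi U1 delta1 G d e) /\
              exists V1, U1 V1 /\ forall x, G x -> V1 x).
  assert (Hkey : forall x, exists G, C G /\ G x).
  { intro x.
    destruct (HU1lf x) as [W [HWo [HWx [l Hl]]]].
    destruct HU1 as [HU1o HU1c] eqn:EHU; destruct (HU1c x) as [V0 [HV0 HV0x]].
    destruct (list_min U1 delta1 l Hdelta1) as [m [Hm Hml]].
    set (e := m / 3).
    destruct (HUV x (e/2)) as [dx [Hdx Hembx]]; [unfold e; lra|].
    set (d := Rmin (dx/2) e).
    assert (Hd : 0 < d) by (apply Rmin_glb_lt; unfold e; lra).
    assert (Hd1 : d <= dx/2) by apply Rmin_l.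
    assert (Hd2 : d <= e) by apply Rmin_r.
    set (s := d / 8).
    destruct (Hcont s ltac:(unfold s; lra) x) as [V [HVo [HVx HV]]].
    destruct Htop as [_ [Hint _]].
    exists (fun z => (W z /\ V z) /\ V0 z). split; [|tauto].
    split; [apply Hint; [apply Hint|]; auto|].
    split; [|exists V0; split; auto; tauto].
    exists d, e. repeat split; auto; [unfold e; lra| | |].
    - intros p [[_ Vp] _]. destruct (HV p Vp) as [Hxp Hpx].
      eapply Hmono; [| exact Hembx |].
      + eapply sub_trans_O in Hpx; [| exact Hrho | apply (sub_id_O rho (phi p) d)].
        intros y Hy. apply (sub_rad_O rho (phi x) (s + d) dx); [unfold s; lra|]. auto.
      + eapply sub_trans_O in Hxp; [| exact Hrho | apply (sub_id_O rho (phi x) (e/2))].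
        intros y Hy. apply (sub_rad_O rho (phi p) (s + e/2) e); [unfold s; lra|]. auto.
    - intros p q [[_ Vp] _] [[_ Vq] _].
      destruct (HV p Vp) as [Hxp Hpx]. destruct (HV q Vq) as [Hxq Hqx].
      set (E := fun eps => 0 < eps /\ subset (phi p) (Onbhd rho eps (phi q)) /\
                           subset (phi q) (Onbhd rho eps (phi p))).
      assert (HE : E (s + s)).
      { split; [unfold s; lra|]. split; eapply sub_trans_O; eauto. }
      destruct (inf_exists E) as [h Hh]; [exists (s+s); auto| intros e' [He' _]; auto|].
      exists h. split; [exact Hh|]. destruct Hh as [Hh _]. specialize (Hh _ HE).
      unfold s in Hh. lra.
    - intros V1 HV1 [z [Hz1 [[Hz2 _] _]]].
      assert (In V1 l) by (apply Hl; auto; exists z; auto).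
      specialize (Hml V1 H HV1). unfold e. lra. }
  assert (HC : open_cover open C).
  { split; [intros U [HU _]; exact HU|]. exact Hkey. }
  destruct Hpc as [_ Hpc]. destruct (Hpc C HC) as [C' [HC' [HC'lf HC'r]]].
  assert (Hex : forall U, exists de : R * R,
             C' U -> Pgood rho emb phi U1 delta1 U (fst de) (snd de)).
  { intro U. destruct (classic (C' U)) as [HU|HU].
    - destruct (HC'r U HU) as [G [[_ [[d [e Hde]] _]] HUG]].
      exists (d, e). intros _. simpl. eapply Pgood_sub; eauto.
    - exists (0, 0). intro; contradiction. }
  set (f := fun U => proj1_sig (constructive_indefinite_description _ (Hex U))).
  assert (Hf : forall U, C' U -> Pgood rho emb phi U1 delta1 U (fst (f U)) (snd (f U))).
  { intros U HU. unfold f. destruct (constructive_indefinite_description _ (Hex U)) as [de Hde].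
    simpl. auto. }
  exists C', (fun U => fst (f U)), (fun U => snd (f U)).
  split; [exact HC'|]. split; [exact HC'lf|]. split.
  { intros U HU. destruct (HC'r U HU) as [G [[_ [_ [V1 [HV1 HGV]]]] HUG]].
    exists V1. split; auto. }
  split; [intros U HU; destruct (Hf U HU) as [a [b [c _]]]; auto|].
  split; [intros U p HU Hp; destruct (Hf U HU) as [_ [_ [_ [H _]]]]; auto|].
  split; [intros U p q HU Hp Hq; destruct (Hf U HU) as [_ [_ [_ [_ [H _]]]]]; auto|].
  intros V1 V2 HV1 HV2 Hm. destruct (Hf V2 HV2) as [_ [_ [_ [_ [_ H]]]]]. auto.
Qed.
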